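(* Let $0<\alpha<1/2$ and $\alpha':=\alpha+\frac12$. Define $C_1=\Gamma(\alpha-\frac12)/\sqrt\pi$ and for $k\ge2$ \[ C_k=\frac14\sum_{j=1}^{k-1}\binom kjC_jC_{k-j}+kC_{k-1}\frac{\Gamma(k\alpha+\frac k2-1)}{\Gamma((k-1)\alpha+\frac k2-1)}. \] Then there exists a constant $A<\infty$ depending only on $\alpha$ such that $|C_k/k!|\le A^kk^{\alpha'k}$ for all $k\ge1$.
   Context: $\Gamma$ is Euler's gamma function. *)

(* Defs.v *)
From Stdlib Require Import Reals.
From Coquelicot Require Import Coquelicot.
Open Scope R_scope.

Definition GammaPos (x : R) : R :=
  RInt_gen (fun t => exp (- t) * Rpower t (x - 1))
           (at_right 0) (Rbar_locally p_infty).

(* Analytic continuation to non-positive non-integers via Gamma(x) = Gamma(x+1)/x,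
   iterated until the argument becomes positive.  (Values at the poles
   0,-1,-2,... are junk and never used.) *)
Fixpoint Gamma_iter (n : nat) (x : R) : R :=
  match n with
  | O => GammaPos x
  | S m => if Rlt_dec 0 x then GammaPos x else Gamma_iter m (x + 1) / x
  end.

Definition Gamma (x : R) : R := Gamma_iter (S (Z.to_nat (up (- x)))) x.

(* Main.v *)
Require Import Defs.
From Stdlib Require Import Reals.
From Coquelicot Require Import Coquelicot.
From Stdlib Require Import Lra Lia Psatz Arith Classical.
Open Scope R_scope.


Definition fg (y t : R) : R := exp (- t) * Rpower t (y - 1).

Lemma fg_pos y t : 0 < fg y t.
Proof. unfold fg, Rpower. apply Rmult_lt_0_compat; apply exp_pos. Qed.

Lemma fg_cont y t : 0 < t -> continuous (fg y) t.
Proof. intros Ht. apply (@ex_derive_continuous R_AbsRing R_NormedModule). unfold fg, Rpower. auto_derive. exact Ht. Qed.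

Lemma fg_ex y a b : 0 < a -> a <= b -> ex_RInt (fg y) a b.
Proof. intros. apply (@ex_RInt_continuous R_CompleteNormedModule). intros z Hz. rewrite Rmin_left in Hz by lra. apply fg_cont; lra. Qed.

Lemma RInt_ge0_fg y a b : 0 < a -> a <= b -> 0 <= RInt (fg y) a b.
Proof. intros. apply RInt_ge_0; [lra| apply fg_ex; lra| intros; left; apply fg_pos]. Qed.

Lemma fg_chasles y a b c : 0 < a -> a <= b -> b <= c ->
  RInt (fg y) a c = RInt (fg y) a b + RInt (fg y) b c.
Proof. intros. rewrite <- (RInt_Chasles (fg y) a b c) by (apply fg_ex; lra). reflexivity. Qed.

Lemma fg_mono y a b a' b' : 0 < a' -> a' <= a -> a <= b -> b <= b' ->
  RInt (fg y) a b <= RInt (fg y) a' b'.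
Proof.
  intros.
  rewrite (fg_chasles y a' a b') by lra.
  rewrite (fg_chasles y a b b') by lra.
  assert (0 <= RInt (fg y) a' a) by (apply RInt_ge0_fg; lra).
  assert (0 <= RInt (fg y) b b') by (apply RInt_ge0_fg; lra).
  lra.
Qed.

Lemma Rpower_1_l y : Rpower 1 y = 1.
Proof. unfold Rpower. rewrite ln_1, Rmult_0_r. apply exp_0. Qed.

Lemma Rpower_pos' a y : 0 < Rpower a y.
Proof. unfold Rpower; apply exp_pos. Qed.

Lemma small_part y a : 0 < y -> 0 < a -> a <= 1 -> RInt (fg y) a 1 <= 1 / y.
Proof.
  intros Hy Ha Ha1.
  assert (HI : is_RInt (fun t => Rpower t (y - 1)) a 1
     (minus (/ y * Rpower 1 y) (/ y * Rpower a y))).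
  { apply (is_RInt_derive (V:=R_CompleteNormedModule) (fun t => / y * Rpower t y)).
    - intros x Hx. rewrite Rmin_left in Hx by lra.
      replace (Rpower x (y - 1)) with (/ y * (y * Rpower x (y - 1))) by (field; lra).
      apply is_derive_scal. apply is_derive_Reals. apply derivable_pt_lim_power. lra.
    - intros x Hx. rewrite Rmin_left in Hx by lra.
      apply (@ex_derive_continuous R_AbsRing R_NormedModule). unfold Rpower. auto_derive. lra. }
  assert (Hle : RInt (fg y) a 1 <= RInt (fun t => Rpower t (y - 1)) a 1).
  { apply RInt_le; [lra | apply fg_ex; lra | eexists; exact HI |].
    intros x Hx. unfold fg.
    assert (exp (- x) <= 1) by (rewrite <- exp_0; left; apply exp_increasing; lra).
    pose proof (Rpower_pos' x (y - 1)). nra. }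
  rewrite (is_RInt_unique _ _ _ _ HI) in Hle.
  rewrite Rpower_1_l in Hle. unfold minus, plus, opp in Hle; simpl in Hle.
  pose proof (Rpower_pos' a y).
  assert (/ y * Rpower a y > 0) by (apply Rmult_lt_0_compat; [apply Rinv_0_lt_compat|]; lra).
  unfold Rdiv. lra.
Qed.

Lemma exp_pow_n x n : exp x ^ n = exp (INR n * x).
Proof.
  rewrite <- Rpower_pow by apply exp_pos. unfold Rpower. rewrite ln_exp. reflexivity.
Qed.

Lemma big_pointwise y N t : 0 < y -> y + 1 <= INR N -> 1 <= t -> fg y t <= INR N ^ N / (t * t).
Proof.
  intros Hy HN Ht.
  assert (HN0 : 0 < INR N) by lra.
  assert (H1 : fg y t * (t * t) = exp (- t) * Rpower t (y + 1)).
  { unfold fg. replace (y + 1) with ((y - 1) + 2) by ring. rewrite Rpower_plus.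
    replace 2 with (INR 2) by (simpl; ring). rewrite Rpower_pow by lra. simpl. ring. }
  assert (H2 : Rpower t (y + 1) <= t ^ N).
  { rewrite <- Rpower_pow by lra. apply Rle_Rpower; lra. }
  assert (H3 : t ^ N <= INR N ^ N * exp t).
  { replace t with (INR N * (t / INR N)) at 1 by (field; lra).
    rewrite Rpow_mult_distr.
    apply Rmult_le_compat_l. apply pow_le; lra.
    replace (exp t) with (exp (t / INR N) ^ N).
    2:{ rewrite exp_pow_n. f_equal. field. lra. }
    apply pow_incr. split. apply Rdiv_le_0_compat; lra.
    pose proof (exp_ineq1_le (t / INR N)). lra. }
  assert (Hexp : exp (- t) * exp t = 1) by (rewrite <- exp_plus; replace (-t + t) with 0 by ring; apply exp_0).
  apply (Rmult_le_reg_r (t * t)). nra.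
  rewrite H1. unfold Rdiv. rewrite Rmult_assoc, Rinv_l by nra. rewrite Rmult_1_r.
  pose proof (exp_pos (- t)).
  apply Rle_trans with (exp (- t) * (INR N ^ N * exp t)).
  apply Rmult_le_compat_l; lra.
  replace (exp (- t) * (INR N ^ N * exp t)) with (INR N ^ N * (exp (- t) * exp t)) by ring.
  rewrite Hexp. lra.
Qed.

Lemma big_part y N b : 0 < y -> y + 1 <= INR N -> 1 <= b -> RInt (fg y) 1 b <= INR N ^ N.
Proof.
  intros Hy HN Hb.
  set (K := INR N ^ N).
  assert (HK : 0 <= K) by (apply pow_le; lra).
  assert (HI : is_RInt (fun t => K / (t * t)) 1 b (minus (- K / b) (- K / 1))).
  { apply (is_RInt_derive (V:=R_CompleteNormedModule) (fun t => - K / t)).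
    - intros x Hx. rewrite Rmin_left in Hx by lra. auto_derive. lra. field. lra.
    - intros x Hx. rewrite Rmin_left in Hx by lra.
      apply (@ex_derive_continuous R_AbsRing R_NormedModule). auto_derive. nra. }
  assert (Hle : RInt (fg y) 1 b <= RInt (fun t => K / (t * t)) 1 b).
  { apply RInt_le; [lra | apply fg_ex; lra | eexists; exact HI |].
    intros x Hx. apply big_pointwise; lra. }
  rewrite (is_RInt_unique _ _ _ _ HI) in Hle.
  unfold minus, plus, opp in Hle; simpl in Hle.
  assert (0 <= K / b) by (apply Rdiv_le_0_compat; lra).
  replace (- K / b + - (- K / 1)) with (K - K / b) in Hle by (field; lra). lra.
Qed.

Lemma fg_bound y : 0 < y -> exists M, forall a b, 0 < a -> a <= b -> RInt (fg y) a b <= M.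
Proof.
  intros Hy. destruct (INR_unbounded (y + 1)) as [N HN].
  exists (1 / y + INR N ^ N). intros a b Ha Hab.
  apply Rle_trans with (RInt (fg y) (Rmin a 1) (Rmax b 1)).
  apply fg_mono; [apply Rmin_pos; lra | apply Rmin_l | lra | apply Rmax_l].
  rewrite (fg_chasles y (Rmin a 1) 1 (Rmax b 1)); [| apply Rmin_pos; lra | apply Rmin_r | apply Rmax_r].
  pose proof (small_part y (Rmin a 1) Hy ltac:(apply Rmin_pos; lra) (Rmin_r _ _)).
  pose proof (big_part y N (Rmax b 1) Hy ltac:(lra) (Rmax_r _ _)). lra.
Qed.

Lemma GammaPos_char y : 0 < y ->
  (forall a b, 0 < a -> a <= b -> RInt (fg y) a b <= GammaPos y) /\
  (forall M, (forall a b, 0 < a -> a <= b -> RInt (fg y) a b <= M) -> GammaPos y <= M).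
Proof.
  intros Hy.
  set (E := fun v : R => exists a b, 0 < a /\ a <= b /\ v = RInt (fg y) a b).
  assert (HB : bound E).
  { destruct (fg_bound y Hy) as [M HM]. exists M. intros v [a [b [Ha [Hab ->]]]]. apply HM; lra. }
  assert (HE : exists v, E v) by (exists (RInt (fg y) 1 1); exists 1, 1; repeat split; lra).
  destruct (completeness E HB HE) as [m [Hub Hlub]].
  assert (Hgen : is_RInt_gen (fg y) (at_right 0) (Rbar_locally p_infty) m).
  { unfold is_RInt_gen, filterlimi, filter_le, filtermapi.
    intros P [eps Heps].
    destruct (classic (exists v, E v /\ m - eps < v)) as [[v [[a0 [b0 [Ha0 [Hab0 ->]]]] Hv]] | Hn].
    2:{ exfalso. assert (m <= m - eps).
        { apply Hlub. intros v Ev. destruct (Rle_or_lt v (m - eps)) as [h|h]; auto.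
          exfalso; apply Hn; exists v; split; auto. }
        pose proof (cond_pos eps). lra. }
    apply (Filter_prod _ _ _ (fun a => 0 < a /\ a < a0) (fun b => b0 < b)).
    - exists (mkposreal a0 Ha0). intros x Hx Hx0. split; auto.
      unfold ball in Hx; simpl in Hx. unfold AbsRing_ball, abs, minus, plus, opp in Hx; simpl in Hx.
      apply Rabs_def2 in Hx. lra.
    - exists b0. auto.
    - intros a b [Ha Haa0] Hb. simpl.
      exists (RInt (fg y) a b). split.
      + apply (RInt_correct (V:=R_CompleteNormedModule)). apply fg_ex; lra.
      + apply Heps. unfold ball; simpl. unfold AbsRing_ball, abs, minus, plus, opp; simpl.
        assert (RInt (fg y) a b <= m) by (apply Hub; exists a, b; repeat split; lra).
        assert (RInt (fg y) a0 b0 <= RInt (fg y) a b) by (apply fg_mono; lra).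
        apply Rabs_def1; lra. }
  assert (HG : GammaPos y = m).
  { unfold GammaPos. apply (is_RInt_gen_unique (fun t => exp (- t) * Rpower t (y - 1))). exact Hgen. }
  rewrite HG. split.
  - intros a b Ha Hab. apply Hub. exists a, b. repeat split; lra.
  - intros M HM. apply Hlub. intros v [a [b [Ha [Hab ->]]]]. apply HM; lra.
Qed.

Lemma GammaPos_ge0 y : 0 < y -> 0 <= GammaPos y.
Proof.
  intros Hy. destruct (GammaPos_char y Hy) as [H _].
  pose proof (H 1 1 Rlt_0_1 (Rle_refl 1)). rewrite RInt_point in H0. exact H0.
Qed.

Lemma exp_le_mono u v : u <= v -> exp u <= exp v.
Proof. intros [h|h]. left; apply exp_increasing; auto. subst; lra. Qed.

Lemma exp_pred t x : 0 < t -> exp ((x - 1) * ln t) = exp (x * ln t) / t.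
Proof.
  intros Ht. replace ((x - 1) * ln t) with (x * ln t + - ln t) by ring.
  rewrite exp_plus, exp_Ropp, exp_ln by lra. reflexivity.
Qed.

Lemma ibp x a b : 0 < x -> 0 < a -> a <= b ->
  RInt (fg (x + 1)) a b = x * RInt (fg x) a b + (exp (- a) * Rpower a x - exp (- b) * Rpower b x).
Proof.
  intros Hx Ha Hab.
  assert (HD : is_RInt (fun t => minus (fg (x + 1) t) (scal x (fg x t))) a b
       (minus (- exp (- b) * Rpower b x) (- exp (- a) * Rpower a x))).
  { apply (is_RInt_derive (V:=R_CompleteNormedModule) (fun t => - exp (- t) * Rpower t x)).
    - intros t Ht. rewrite Rmin_left, Rmax_right in Ht by lra.
      unfold fg, Rpower. auto_derive. lra.
      unfold minus, plus, opp, scal; simpl; unfold mult; simpl.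
      replace (x + 1 - 1) with x by ring. rewrite exp_pred by lra. field. lra.
    - intros t Ht. rewrite Rmin_left, Rmax_right in Ht by lra.
      apply (@ex_derive_continuous R_AbsRing R_NormedModule). unfold fg, Rpower. unfold minus, plus, opp, scal; simpl; unfold mult; simpl. auto_derive. lra. }
  assert (H1 := is_RInt_minus _ _ _ _ _ _
     (RInt_correct (V:=R_CompleteNormedModule) (fg (x + 1)) a b (fg_ex _ _ _ Ha Hab))
     (is_RInt_scal _ _ _ x _ (RInt_correct (V:=R_CompleteNormedModule) (fg x) a b (fg_ex _ _ _ Ha Hab)))).
  pose proof (is_RInt_unique _ _ _ _ HD) as E1.
  assert (E2 : RInt (fun t => minus (fg (x + 1) t) (scal x (fg x t))) a b =
     minus (RInt (fg (x + 1)) a b) (scal x (RInt (fg x) a b))) by (apply is_RInt_unique; exact H1).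
  rewrite E1 in E2. unfold minus, plus, opp, scal in E2; simpl in E2; unfold mult in E2; simpl in E2.
  lra.
Qed.

Lemma Gp1_le x a b : 0 < x -> 0 < a -> a <= b -> RInt (fg (x + 1)) a b <= x * GammaPos x.
Proof.
  intros Hx Ha Hab. apply Rle_plus_epsilon. intros eta Heta.
  set (a' := Rmin a (Rpower eta (1 / x))).
  assert (Ha' : 0 < a') by (apply Rmin_pos; [lra | apply Rpower_pos']).
  assert (Ha'a : a' <= a) by apply Rmin_l.
  apply Rle_trans with (RInt (fg (x + 1)) a' b). apply fg_mono; lra.
  rewrite ibp by lra.
  destruct (GammaPos_char x Hx) as [Hup _].
  pose proof (Hup a' b Ha' ltac:(lra)).
  assert (Hp : Rpower a' x <= eta).
  { apply Rle_trans with (Rpower (Rpower eta (1 / x)) x).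
    apply Rle_Rpower_l; [lra | split; [lra | apply Rmin_r]].
    rewrite Rpower_mult. replace (1 / x * x) with 1 by (field; lra). rewrite Rpower_1; lra. }
  assert (exp (- a') <= 1) by (rewrite <- exp_0; apply exp_le_mono; lra).
  pose proof (Rpower_pos' a' x). pose proof (Rpower_pos' b x). pose proof (exp_pos (- b)).
  assert (exp (- a') * Rpower a' x <= Rpower a' x) by nra.
  assert (0 <= exp (- b) * Rpower b x) by nra.
  nra.
Qed.

Lemma Gratio x al : 0 < x -> 0 < al < 1 ->
  GammaPos (x + al) <= 2 * Rpower x al * GammaPos x.
Proof.
  intros Hx Hal.
  destruct (GammaPos_char (x + al) ltac:(lra)) as [_ Hleast].
  apply Hleast. intros a b Ha Hab.
  set (g := fun t => plus (scal (Rpower x al) (fg x t)) (scal (Rpower x (al - 1)) (fg (x + 1) t))).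
  assert (Hg := is_RInt_plus _ _ _ _ _ _
     (is_RInt_scal _ _ _ (Rpower x al) _ (RInt_correct (V:=R_CompleteNormedModule) (fg x) a b (fg_ex _ _ _ Ha Hab)))
     (is_RInt_scal _ _ _ (Rpower x (al - 1)) _ (RInt_correct (V:=R_CompleteNormedModule) (fg (x + 1)) a b (fg_ex _ _ _ Ha Hab)))).
  fold g in Hg.
  apply Rle_trans with (RInt g a b).
  - apply RInt_le; [lra | apply fg_ex; lra | eexists; exact Hg |].
    intros t Ht. unfold g, fg, plus, scal; simpl; unfold mult; simpl.
    assert (Ht0 : 0 < t) by lra.
    replace (x + al - 1) with (al + (x - 1)) by ring. rewrite Rpower_plus.
    replace (x + 1 - 1) with (1 + (x - 1)) by ring. rewrite Rpower_plus. rewrite Rpower_1 by lra.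
    assert (Hk : Rpower t al <= Rpower x al + Rpower x (al - 1) * t).
    { destruct (Rle_or_lt t x) as [h|h].
      - pose proof (Rle_Rpower_l t x al ltac:(lra) ltac:(lra)).
        pose proof (Rpower_pos' x (al - 1)). nra.
      - replace al with ((al - 1) + 1) at 1 by ring. rewrite Rpower_plus, Rpower_1 by lra.
        assert (Rpower t (al - 1) <= Rpower x (al - 1)).
        { unfold Rpower. apply exp_le_mono. pose proof (ln_le x t Hx ltac:(lra)). nra. }
        pose proof (Rpower_pos' x al). nra. }
    pose proof (exp_pos (- t)). pose proof (Rpower_pos' t (x - 1)).
    assert (0 < exp (- t) * Rpower t (x - 1)) by nra.
    nra.
  - assert (Eg : RInt g a b = plus (scal (Rpower x al) (RInt (fg x) a b)) (scal (Rpower x (al - 1)) (RInt (fg (x + 1)) a b)))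
      by (apply is_RInt_unique; exact Hg).
    rewrite Eg. unfold plus, scal; simpl; unfold mult; simpl.
    destruct (GammaPos_char x Hx) as [Hup _].
    pose proof (Hup a b Ha Hab).
    pose proof (Gp1_le x a b Hx Ha Hab).
    assert (Hpx : Rpower x (al - 1) * x = Rpower x al).
    { rewrite <- (Rpower_1 x) at 2 by lra. rewrite <- Rpower_plus. f_equal; ring. }
    pose proof (Rpower_pos' x al). pose proof (Rpower_pos' x (al - 1)).
    assert (Rpower x al * RInt (fg x) a b <= Rpower x al * GammaPos x) by (apply Rmult_le_compat_l; lra).
    assert (HH : Rpower x (al - 1) * RInt (fg (x + 1)) a b <= Rpower x (al - 1) * (x * GammaPos x)) by (apply Rmult_le_compat_l; lra).
    replace (Rpower x (al - 1) * (x * GammaPos x)) with (Rpower x al * GammaPos x) in HH by (rewrite <- Hpx; ring).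
    lra.
Qed.

Lemma Gamma_pos_eq y : 0 < y -> Gamma y = GammaPos y.
Proof. intros Hy. unfold Gamma. simpl. destruct (Rlt_dec 0 y); [reflexivity | lra]. Qed.

Lemma Gamma_ratio x al : 0 < x -> 0 < al < 1 ->
  Rabs (Gamma (x + al) / Gamma x) <= 2 * Rpower x al.
Proof.
  intros Hx Hal. rewrite !Gamma_pos_eq by lra.
  pose proof (Gratio x al Hx Hal).
  pose proof (GammaPos_ge0 x Hx). pose proof (GammaPos_ge0 (x + al) ltac:(lra)).
  pose proof (Rpower_pos' x al).
  destruct H0 as [h|h].
  - rewrite Rabs_right. apply (Rmult_le_reg_r (GammaPos x)); auto.
    unfold Rdiv. rewrite Rmult_assoc, Rinv_l by lra. lra.
    apply Rle_ge, Rdiv_le_0_compat; lra.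
  - rewrite <- h. unfold Rdiv. rewrite Rinv_0, Rmult_0_r, Rabs_R0. lra.
Qed.

Lemma sum_le_loc (a b : nat -> R) n m :
  (forall k, (n <= k <= m)%nat -> a k <= b k) -> sum_n_m a n m <= sum_n_m b n m.
Proof.
  induction m as [|m IH]; intros H.
  - destruct n as [|n].
    + rewrite !sum_n_n. apply H. lia.
    + rewrite !sum_n_m_zero by lia. apply Rle_refl.
  - destruct (Compare_dec.le_lt_dec n (S m)) as [h|h].
    + destruct (Nat.eq_dec n (S m)) as [e|e].
      * subst. rewrite !sum_n_n. apply H. lia.
      * rewrite !sum_n_Sm by lia. apply Rplus_le_compat.
        apply IH. intros; apply H; lia. apply H; lia.
    + rewrite !sum_n_m_zero by lia. apply Rle_refl.
Qed.

Lemma sum_abs (a : nat -> R) n m :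
  Rabs (sum_n_m a n m) <= sum_n_m (fun j => Rabs (a j)) n m.
Proof. apply (norm_sum_n_m (K:=R_AbsRing) (V:=R_NormedModule)). Qed.

Lemma telesc (F : nat -> R) n m : (n <= m)%nat ->
  sum_n_m (fun j => F j - F (S j)) n m = F n - F (S m).
Proof.
  induction m as [|m IH]; intros H.
  - assert (n = 0%nat) by lia. subst. rewrite sum_n_n. reflexivity.
  - destruct (Nat.eq_dec n (S m)) as [e|e].
    + subst. rewrite sum_n_n. reflexivity.
    + rewrite sum_n_Sm by lia. rewrite IH by lia. unfold plus; simpl. ring.
Qed.

Lemma sum_div (a : nat -> R) c n m :
  sum_n_m (fun j => a j / c) n m = sum_n_m a n m / c.
Proof. apply (sum_n_m_mult_r (K:=R_Ring)). Qed.

Lemma sum_plusR (a b : nat -> R) n m :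
  sum_n_m (fun j => a j + b j) n m = sum_n_m a n m + sum_n_m b n m.
Proof. apply (sum_n_m_plus (G:=R_AbelianMonoid)). Qed.

Lemma sum_scalR (a : nat -> R) c n m :
  sum_n_m (fun j => c * a j) n m = c * sum_n_m a n m.
Proof. apply (sum_n_m_mult_l (K:=R_Ring)). Qed.

Lemma inv_sq_le p : 1 <= p -> (/ p) ^ 2 <= 2 * (/ p - / (p + 1)).
Proof.
  intros Hp.
  assert (E : 2 * (/ p - / (p + 1)) - (/ p) ^ 2 = (p - 1) / (p ^ 2 * (p + 1))) by (field; lra).
  assert (0 <= (p - 1) / (p ^ 2 * (p + 1))). { apply Rdiv_le_0_compat. lra. nra. }
  lra.
Qed.

Lemma term_le p q : 1 <= p -> 1 <= q ->
  1 / (p ^ 2 * q ^ 2) <= 4 / (p + q) ^ 2 * ((/ p - / (p + 1)) + (/ q - / (q + 1))).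
Proof.
  intros Hp Hq.
  replace (1 / (p ^ 2 * q ^ 2)) with (/ (p + q) ^ 2 * (/ p + / q) ^ 2) by (field; lra).
  assert (H1 : (/ p + / q) ^ 2 <= 2 * (/ p) ^ 2 + 2 * (/ q) ^ 2) by (pose proof (pow2_ge_0 (/ p - / q)); set (u := / p) in *; set (v := / q) in *; nra).
  pose proof (inv_sq_le p Hp). pose proof (inv_sq_le q Hq).
  assert (Hpq : 0 < / (p + q) ^ 2) by (apply Rinv_0_lt_compat; nra).
  unfold Rdiv. rewrite Rmult_comm with (r1 := 4).
  rewrite Rmult_assoc. apply Rmult_le_compat_l. lra. lra.
Qed.

Lemma conv_bound k : (2 <= k)%nat ->
  sum_n_m (fun j => 1 / (INR j ^ 2 * INR (k - j) ^ 2)) 1 (k - 1) <= 8 / INR k ^ 2.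
Proof.
  intros Hk.
  assert (HK : 2 <= INR k) by (replace 2 with (INR 2) by (simpl; ring); apply le_INR; lia).
  set (F1 := fun j : nat => / INR j).
  set (F2 := fun j : nat => - / (INR k - INR j + 1)).
  apply Rle_trans with (sum_n_m (fun j => 4 / INR k ^ 2 * ((F1 j - F1 (S j)) + (F2 j - F2 (S j)))) 1 (k - 1)).
  - apply sum_le_loc. intros j Hj.
    assert (Hj1 : 1 <= INR j) by (replace 1 with (INR 1) by reflexivity; apply le_INR; lia).
    assert (Hkj : INR (k - j) = INR k - INR j) by (apply minus_INR; lia).
    assert (Hkj1 : 1 <= INR k - INR j) by (rewrite <- Hkj; replace 1 with (INR 1) by reflexivity; apply le_INR; lia).
    rewrite Hkj. unfold F1, F2. rewrite S_INR.
    replace (INR k - (INR j + 1) + 1) with (INR k - INR j) by ring.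
    pose proof (term_le (INR j) (INR k - INR j) Hj1 Hkj1) as T.
    replace (INR j + (INR k - INR j)) with (INR k) in T by ring.
    eapply Rle_trans; [exact T | right; ring].
  - rewrite sum_scalR, sum_plusR, !telesc by lia.
    replace (S (k - 1)) with k by lia. unfold F1, F2.
    replace (INR k - INR k + 1) with 1 by ring. replace (INR k - INR 1 + 1) with (INR k) by (simpl; ring).
    simpl (INR 1).
    assert (0 < / INR k) by (apply Rinv_0_lt_compat; lra).
    assert (0 < 4 / INR k ^ 2) by (apply Rdiv_lt_0_compat; nra).
    replace (8 / INR k ^ 2) with (4 / INR k ^ 2 * 2) by (field; lra).
    apply Rmult_le_compat_l. lra. rewrite Rinv_1. lra.
Qed.

Lemma sum_mulr (a : nat -> R) c n m :
  sum_n_m (fun j => a j * c) n m = sum_n_m a n m * c.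
Proof. apply (sum_n_m_mult_r (K:=R_Ring)). Qed.

Lemma INR_ge1 k : (1 <= k)%nat -> 1 <= INR k.
Proof. intros; replace 1 with (INR 1) by reflexivity; apply le_INR; lia. Qed.

Theorem lemma3p4 (alpha : R) (Hpos : 0 < alpha) (Hlt : alpha < 1 / 2)
  (C : nat -> R)
  (HC1 : C 1%nat = Gamma (alpha - 1 / 2) / sqrt PI)
  (HCk : forall k : nat, (2 <= k)%nat ->
     C k = 1 / 4 * sum_n_m (fun j => Binomial.C k j * C j * C (k - j)%nat) 1 (k - 1)
           + INR k * C (k - 1)%nat *
             (Gamma (INR k * alpha + INR k / 2 - 1)
              / Gamma (INR (k - 1) * alpha + INR k / 2 - 1))) :
  exists A : R, forall k : nat, (1 <= k)%nat ->
    Rabs (C k / INR (Factorial.fact k)) <= A ^ k * Rpower (INR k) ((alpha + 1 / 2) * INR k).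
Proof.
  set (s := alpha + 1 / 2).
  set (A := 16 + 4 * Rabs (C 1%nat)).
  set (c := fun k => C k / INR (Factorial.fact k)).
  set (W := fun k : nat => Rpower (INR k) (s * INR k) / INR k ^ 2).
  assert (HA : 16 <= A) by (unfold A; pose proof (Rabs_pos (C 1%nat)); lra).
  assert (Step : forall k, (2 <= k)%nat ->
     (forall j, (1 <= j <= k - 1)%nat -> Rabs (c j) <= / 4 * A ^ j * W j) ->
     Rabs (c k) <= / 4 * A ^ k * W k).
  { intros k Hk IH.
    assert (HK : 2 <= INR k) by (replace 2 with (INR 2) by (simpl; ring); apply le_INR; lia).
    assert (Heq0 : c k = / 4 * sum_n_m (fun j => c j * c (k - j)%nat) 1 (k - 1)
        + c (k - 1)%nat * (Gamma (INR k * alpha + INR k / 2 - 1)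
              / Gamma (INR (k - 1) * alpha + INR k / 2 - 1))).
    { unfold c. rewrite (HCk k Hk).
      assert (Hext : sum_n_m (fun j => Binomial.C k j * C j * C (k - j)%nat) 1 (k - 1) = sum_n_m
                 (fun j => (C j / INR (Factorial.fact j) * (C (k - j)%nat / INR (Factorial.fact (k - j)))) * INR (Factorial.fact k)) 1 (k - 1)).
      { apply sum_n_m_ext_loc. intros j Hj.
        change (Binomial.C k j * C j * C (k - j)%nat = C j / INR (Factorial.fact j) * (C (k - j)%nat / INR (Factorial.fact (k - j))) * INR (Factorial.fact k)).
        unfold Binomial.C. field. split; apply INR_fact_neq_0. }
      rewrite Hext.
      rewrite sum_mulr.
      assert (Hf : INR (Factorial.fact k) = INR k * INR (Factorial.fact (k - 1))).
      { destruct k as [|k']; [lia|]. simpl (S k' - 1)%nat. rewrite fact_simpl, mult_INR.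
        replace (k' - 0)%nat with k' by lia. reflexivity. }
      rewrite Hf.
      set (g := Gamma (INR k * alpha + INR k / 2 - 1) / Gamma (INR (k - 1) * alpha + INR k / 2 - 1)).
      field. split; [apply INR_fact_neq_0 | lra]. }
    set (m := (k - 1)%nat) in *.
    assert (Hm : INR m = INR k - 1) by (unfold m; rewrite minus_INR by lia; simpl; ring).
    set (x := INR m * alpha + INR k / 2 - 1) in *.
    assert (Hx : 0 < x) by (unfold x; rewrite Hm; nra).
    set (G := Gamma (INR k * alpha + INR k / 2 - 1) / Gamma x) in *.
    assert (HG : Rabs G <= 2 * Rpower (INR k) s).
    { unfold G. replace (INR k * alpha + INR k / 2 - 1) with (x + alpha) by (unfold x; rewrite Hm; ring).
      eapply Rle_trans. apply Gamma_ratio; lra.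
      apply Rmult_le_compat_l. lra.
      apply Rle_trans with (Rpower (INR k) alpha).
      apply Rle_Rpower_l; [lra | split; [lra | unfold x; rewrite Hm; nra]].
      apply Rle_Rpower; unfold s; lra. }
    set (Rk := Rpower (INR k) (s * INR k)).
    assert (HRk : 0 < Rk) by apply Rpower_pos'.
    assert (HAk : 0 < A ^ k) by (apply pow_lt; lra).
    assert (Hterm : forall j, (1 <= j <= k - 1)%nat ->
       Rabs (c j * c (k - j)%nat) <= / 16 * A ^ k * Rk * (1 / (INR j ^ 2 * INR (k - j) ^ 2))).
    { intros j Hj. rewrite Rabs_mult.
      assert (Hj1 : 1 <= INR j) by (apply INR_ge1; lia).
      assert (Hkj : INR (k - j) = INR k - INR j) by (apply minus_INR; lia).
      assert (Hkj1 : 1 <= INR (k - j)) by (apply INR_ge1; lia).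
      pose proof (IH j ltac:(lia)) as I1. pose proof (IH (k - j)%nat ltac:(lia)) as I2.
      eapply Rle_trans.
      { apply Rmult_le_compat; try apply Rabs_pos; [exact I1 | exact I2]. }
      unfold W.
      assert (HP : A ^ j * A ^ (k - j) = A ^ k) by (rewrite <- pow_add; f_equal; lia).
      assert (HR : Rpower (INR j) (s * INR j) * Rpower (INR (k - j)) (s * INR (k - j)) <= Rk).
      { apply Rle_trans with (Rpower (INR k) (s * INR j) * Rpower (INR k) (s * INR (k - j))).
        apply Rmult_le_compat; try (left; apply Rpower_pos').
        apply Rle_Rpower_l; [unfold s; nra | lra].
        apply Rle_Rpower_l; [unfold s; nra | lra].
        rewrite <- Rpower_plus. unfold Rk. right; f_equal. rewrite Hkj; ring. }
      assert (Hd : 0 < 1 / (INR j ^ 2 * INR (k - j) ^ 2)) by (apply Rdiv_lt_0_compat; [lra | apply Rmult_lt_0_compat; apply pow_lt; lra]).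
      replace (/ 4 * A ^ j * (Rpower (INR j) (s * INR j) / INR j ^ 2) *
               (/ 4 * A ^ (k - j) * (Rpower (INR (k - j)) (s * INR (k - j)) / INR (k - j) ^ 2)))
        with (/ 16 * (A ^ j * A ^ (k - j)) * (Rpower (INR j) (s * INR j) * Rpower (INR (k - j)) (s * INR (k - j))) * (1 / (INR j ^ 2 * INR (k - j) ^ 2)))
        by (field; nra).
      rewrite HP. apply Rmult_le_compat_r. lra. apply Rmult_le_compat_l. nra. exact HR. }
    assert (Hsum : Rabs (sum_n_m (fun j => c j * c (k - j)%nat) 1 m) <= / 16 * A ^ k * Rk * (8 / INR k ^ 2)).
    { eapply Rle_trans. apply sum_abs.
      eapply Rle_trans. apply sum_le_loc. exact Hterm.
      rewrite sum_scalR. apply Rmult_le_compat_l. nra. apply conv_bound. lia. }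
    assert (Hm1 : 1 <= INR m) by lra.
    assert (HWm : W m * Rpower (INR k) s <= 4 * (Rk / INR k ^ 2)).
    { unfold W.
      apply Rle_trans with (Rpower (INR k) (s * INR m) * Rpower (INR k) s / INR m ^ 2).
      { unfold Rdiv. rewrite !Rmult_assoc. rewrite (Rmult_comm (/ INR m ^ 2)). rewrite <- !Rmult_assoc.
        apply Rmult_le_compat_r. left; apply Rinv_0_lt_compat; nra.
        apply Rmult_le_compat_r. left; apply Rpower_pos'.
        apply Rle_Rpower_l; [unfold s; nra | lra]. }
      rewrite <- Rpower_plus. replace (s * INR m + s) with (s * INR k) by (rewrite Hm; ring). fold Rk.
      unfold Rdiv. rewrite <- Rmult_assoc, (Rmult_comm 4), Rmult_assoc. apply Rmult_le_compat_l. lra.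
      apply Rle_trans with (/ (INR k / 2) ^ 2).
      apply Rinv_le_contravar; nra. right. field. lra. }
    assert (HAk' : A ^ k = A * A ^ m) by (unfold m; destruct k; [lia|]; simpl; replace (k - 0)%nat with k by lia; reflexivity).
    assert (HPm : 0 < A ^ m) by (apply pow_lt; lra).
    rewrite Heq0. fold m. fold x. fold G.
    eapply Rle_trans. apply Rabs_triang. rewrite Rabs_mult, Rabs_mult.
    rewrite (Rabs_right (/ 4)) by lra.
    pose proof (IH m ltac:(unfold m; lia)) as Im.
    assert (Hlin : Rabs (c m) * Rabs G <= / 4 * A ^ m * W m * (2 * Rpower (INR k) s)).
    { apply Rmult_le_compat; try apply Rabs_pos; assumption. }
    assert (HWm0 : 0 <= W m) by (unfold W; apply Rdiv_le_0_compat; [left; apply Rpower_pos' | nra]).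
    assert (Hlin2 : Rabs (c m) * Rabs G <= 2 * A ^ m * (Rk / INR k ^ 2)).
    { eapply Rle_trans. exact Hlin.
      replace (/ 4 * A ^ m * W m * (2 * Rpower (INR k) s)) with (/ 2 * A ^ m * (W m * Rpower (INR k) s)) by field.
      replace (2 * A ^ m * (Rk / INR k ^ 2)) with (/ 2 * A ^ m * (4 * (Rk / INR k ^ 2))) by (field; lra).
      apply Rmult_le_compat_l. nra. exact HWm. }
    unfold W. fold Rk.
    assert (Hq : 0 < Rk / INR k ^ 2) by (apply Rdiv_lt_0_compat; nra).
    replace (/ 16 * A ^ k * Rk * (8 / INR k ^ 2)) with (/ 2 * A ^ k * (Rk / INR k ^ 2)) in Hsum by (field; lra).
    rewrite HAk' in *.
    set (q := Rk / INR k ^ 2) in *. set (P := A ^ m) in *.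
    assert (/ 4 * Rabs (sum_n_m (fun j : nat => c j * c (k - j)%nat) 1 m) <= / 8 * (A * P) * q) by lra.
    assert (HX : 2 * P * q <= / 8 * (A * P) * q) by (assert (0 < P * q) by (apply Rmult_lt_0_compat; lra); nra).
    lra. }
  assert (Main : forall n k, (1 <= k <= n)%nat -> Rabs (c k) <= / 4 * A ^ k * W k).
  { induction n as [|n IHn]; intros k Hk. lia.
    destruct (Nat.eq_dec k 1) as [->|Hk1].
    - unfold c, W. simpl. rewrite Rdiv_1_r, Rmult_1_r, Rmult_1_r, Rpower_1_l. pose proof (Rabs_pos (C 1%nat)).
      unfold A. lra.
    - destruct (Nat.le_gt_cases k n) as [h|h].
      + apply IHn. lia.
      + apply Step. lia. intros j Hj. apply IHn. lia. }
  exists A. intros k Hk.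
  pose proof (Main k k ltac:(lia)) as H. unfold c, W in H. fold s.
  assert (HK1 : 1 <= INR k) by (apply INR_ge1; lia).
  assert (0 <= A ^ k * Rpower (INR k) (s * INR k)).
  { apply Rmult_le_pos. apply pow_le; lra. left; apply Rpower_pos'. }
  eapply Rle_trans; [exact H|].
  unfold Rdiv. 
  assert (Hi : 0 < / INR k ^ 2 <= 1).
  { split. apply Rinv_0_lt_compat; nra. rewrite <- Rinv_1. apply Rinv_le_contravar; nra. }
  rewrite <- Rmult_assoc. rewrite (Rmult_assoc (/4)).
  nra.
Qed.
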